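(* Let $p$ be an odd prime, $k\in\mathbb N$, and $n=p^a m$ with $a\in\mathbb N_0$, $m\in\mathbb N$, $p\nmid m$. Then for every $\varepsilon>0$, \[ \left|\sum_{d\mid n}\left(\frac dp\right)d^k\right|\gg_\varepsilon m^{k-\varepsilon}, \qquad \operatorname{sgn}\left(\sum_{d\mid n}\left(\frac dp\right)d^k\right)=\left(\frac mp\right). \]
   Context: $\left(\frac{\cdot}{p}\right)$ is the Legendre symbol; sums are over positive divisors; $\gg_\varepsilon$ means the inequality $\ge c_\varepsilon m^{k-\varepsilon}$ holds with a constant $c_\varepsilon>0$ depending only on $\varepsilon$. *)

(* Defs.v *)
From HB Require Import structures.
From mathcomp Require Import all_boot all_order all_algebra.
From mathcomp Require Import all_classical all_reals.
From mathcomp Require Import exp.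
Set Implicit Arguments. Unset Strict Implicit. Unset Printing Implicit Defensive.
Import Order.TTheory GRing.Theory Num.Theory.
Local Open Scope ring_scope.

Definition legendre (a p : nat) : int :=
  if (p %| a)%N then 0
  else if [exists x : 'I_p, ((x : nat) ^ 2 == a %[mod p])%N] then 1 else -1.

Definition legsum (p k n : nat) : int :=
  \sum_(d <- divisors n) legendre d p * (d ^ k)%:Z.

(* Main.v *)
Require Import Defs.
From HB Require Import structures.
From mathcomp Require Import all_boot all_order all_algebra.
From mathcomp Require Import all_classical all_reals.
From mathcomp Require Import exp.
From mathcomp Require Import finfield.
From mathcomp Require Import ring lra.
Import Order.TTheory GRing.Theory Num.Theory.
Local Open Scope ring_scope.

Section Leg.
Variable p : nat.
Hypothesis pp : prime p.
Hypothesis po : odd p.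

Local Notation F := 'F_p.

Lemma natF_eq (m n : nat) : ((m%:R : F) == n%:R) = (m == n %[mod p])%N.
Proof.
wlog le: m n / (m <= n)%N.
  move=> H; case: (leqP m n) => [|/ltnW] h; first exact: H.
  by rewrite eq_sym H // eq_sym.
rewrite eq_sym -subr_eq0 -natrB // -(dvdn_pcharf (pchar_Fp pp)).
by rewrite eq_sym eqn_mod_dvd.
Qed.

Lemma natF0 (m : nat) : ((m%:R : F) == 0) = (p %| m)%N.
Proof. by rewrite (dvdn_pcharf (pchar_Fp pp)). Qed.

Lemma Fval (y : F) : (y < p)%N /\ ((y : nat)%:R = y).
Proof.
split; first by have := ltn_ord y; rewrite [X in (_ < X)%N -> _](Fp_cast pp).
exact: natr_Zp.
Qed.

Definition sqF (a : F) := [exists y : F, y ^+ 2 == a].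

Lemma sqE a : [exists x : 'I_p, ((x:nat)^2 == a %[mod p])%N] = sqF a%:R.
Proof.
apply/existsP/existsP => [[x hx]|[y /eqP hy]].
  by exists (x%:R); rewrite -natrX natF_eq.
have [lt ey] := Fval y.
exists (Ordinal lt) => /=; rewrite -natF_eq natrX ey hy //.
Qed.


Let h := p./2.
Lemma p_eq : p = (h.*2).+1.
Proof. by rewrite -[LHS](odd_double_half p) po add1n. Qed.
Lemma h_gt0 : (0 < h)%N.
Proof.
rewrite lt0n; apply/eqP => h0; move: (prime_gt1 pp); rewrite p_eq h0; by [].
Qed.

Lemma unit_pow (y : F) : y != 0 -> y ^+ (h.*2) = 1.
Proof.
move=> y0; have : y ^+ (h.*2).+1 = y by rewrite -p_eq -[X in _ ^+ X](card_Fp pp) expf_card.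
rewrite exprS.
move=> e; apply: (mulfI y0); by rewrite e mulr1.
Qed.

Lemma F_m1 : (-1 : F) != 1.
Proof.
apply/negP => /eqP h1.
have : ((2%:R : F) == 0) by rewrite -{1}[2%N]/(1+1)%N natrD -{1}h1 addNr.
rewrite natF0 dvdn_prime2 //.
move=> /eqP p2; by move: po; rewrite p2.
Qed.

Lemma sq_pow (a : F) : a != 0 -> sqF a -> a ^+ h = 1.
Proof.
move=> a0 /existsP[y /eqP hy]; have y0 : y != 0.
  by apply: contraNneq a0 => y0; rewrite -hy y0 expr0n.
by rewrite -hy -exprM mul2n unit_pow.
Qed.

Lemma euler (a : F) : a != 0 -> (a ^+ h == 1) = sqF a.
Proof.
move=> a0; apply/idP/idP; last by move=> sa; rewrite (sq_pow _ a0 sa).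
move=> ah; apply: contraT => nsq.
pose rs := a :: [seq (i%:R : F) ^+ 2 | i <- iota 1 h].
have Pn0 : ('X^h - (1 : F)%:P) != 0.
  by rewrite -size_poly_eq0 size_XnsubC // h_gt0.
have hroot : forall x : F, x ^+ h = 1 -> root ('X^h - 1%:P) x.
  by move=> x hx; rewrite rootE !hornerE hx subrr.
have lt_ij : forall i j, (i \in iota 1 h) -> (j \in iota 1 h) -> (0 < i + j < p)%N.
  move=> i j; rewrite !mem_iota => /andP[i1 ih] /andP[j1 jh].
  rewrite p_eq; apply/andP; split; first by rewrite addn_gt0 i1.
  by rewrite ltnS -addnn leq_add // -ltnS -[h.+1]add1n.
have nz : forall i, i \in iota 1 h -> (i%:R : F) != 0.
  move=> i hi; rewrite natF0; apply/negP => /dvdn_leq.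
  have := lt_ij i i hi hi; rewrite mem_iota in hi.
  case/andP: hi => i1 _; rewrite i1 => /andP[_ lt] /(_ isT) le.
  by move: (leq_ltn_trans le (leq_ltn_trans (leq_addr i i) lt)); rewrite ltnn.
have Hall : all (root ('X^h - 1%:P)) rs.
  rewrite /= hroot ?(eqP ah) //=.
  apply/allP => _ /mapP[i hi ->]; apply: hroot.
  apply: sq_pow; first by rewrite expf_neq0 // nz.
  by apply/existsP; exists (i%:R).
have Huniq : uniq rs.
  rewrite /= map_inj_in_uniq ?iota_uniq ?andbT.
    apply/negP => /mapP[i hi ea]; move/negP: nsq; apply; apply/existsP; exists (i%:R).
    by rewrite ea.
  move=> i j hi hj /eqP; rewrite eqf_sqr => /orP[|].
    rewrite natF_eq !modn_small => [/eqP//| |].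
      by have := lt_ij j j hj hj; case/andP => _; apply: leq_ltn_trans; rewrite leq_addr.
    by have := lt_ij i i hi hi; case/andP => _; apply: leq_ltn_trans; rewrite leq_addr.
  rewrite -addr_eq0 -natrD natF0 => /dvdn_leq.
  have := lt_ij i j hi hj; case/andP => -> lt /(_ isT) le.
  by move: (leq_ltn_trans le lt); rewrite ltnn.
have := @max_poly_roots _ _ rs Pn0 Hall Huniq.
by rewrite size_XnsubC ?h_gt0 // /= size_map size_iota ltnn.
Qed.

Lemma pm1 (a : F) : a != 0 -> (a ^+ h == 1) || (a ^+ h == -1).
Proof. by move=> a0; rewrite -sqrf_eq1 -exprM muln2 unit_pow. Qed.

Lemma sq_mul (a b : F) : a != 0 -> b != 0 -> sqF (a * b) = (sqF a == sqF b).
Proof.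
move=> a0 b0; rewrite -!euler ?mulf_neq0 // exprMn.
have n1 := F_m1; have n1' : (1 : F) != -1 by rewrite eq_sym.
by case/orP: (pm1 _ a0) => /eqP ->; case/orP: (pm1 _ b0) => /eqP ->;
  rewrite ?mulr1 ?mul1r ?mulrNN ?mulr1 ?eqxx ?(negbTE n1) ?(negbTE n1').
Qed.

Lemma legendreE a : legendre a p = if (p %| a)%N then 0 else if sqF (a%:R) then 1 else -1.
Proof. by rewrite /legendre sqE. Qed.

Lemma legendreM a b : legendre (a * b) p = legendre a p * legendre b p.
Proof.
rewrite !legendreE Euclid_dvdM //.
case: (boolP (p %| a)%N) => pa; first by rewrite mul0r.
case: (boolP (p %| b)%N) => pb; first by rewrite mulr0.
rewrite /= natrM sq_mul ?natF0 //.
by case: (sqF a%:R); case: (sqF b%:R).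
Qed.

Lemma legendre1 : legendre 1 p = 1.
Proof.
have s1 : sqF (1%:R) by apply/existsP; exists 1; rewrite expr1n.
by rewrite legendreE Euclid_dvd1 // s1.
Qed.

Lemma legendre_pm1 a : ~~ (p %| a)%N -> (legendre a p = 1) \/ (legendre a p = -1).
Proof. by rewrite legendreE => /negbTE ->; case: ifP; [left|right]. Qed.

Lemma legendre_dvd a : (p %| a)%N -> legendre a p = 0.
Proof. by rewrite legendreE => ->. Qed.

End Leg.

Lemma gcd_mul_coprime d a b : coprime a b -> (d %| a * b)%N ->
  d = (gcdn d a * gcdn d b)%N.
Proof.
move=> cab dab; apply/eqP; rewrite eqn_dvd; apply/andP; split.
  rewrite muln_gcdl !muln_gcdr !dvdn_gcd dab andbT.
  by rewrite (dvdn_mulr _ (dvdnn d)) (dvdn_mulr _ (dvdnn d)) (dvdn_mull _ (dvdnn d)).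
rewrite Gauss_dvd ?dvdn_gcdl ?dvdn_gcdl //.
  by rewrite (coprime_dvdl (dvdn_gcdr _ _)) // coprime_sym (coprime_dvdl (dvdn_gcdr _ _)) // coprime_sym.
Qed.

Lemma divisors_mul_perm a b : coprime a b -> (0 < a)%N -> (0 < b)%N ->
  perm_eq (divisors (a * b)) [seq (d1 * d2)%N | d1 <- divisors a, d2 <- divisors b].
Proof.
move=> cab a0 b0; apply: uniq_perm; first exact: divisors_uniq.
  apply: allpairs_uniq; rewrite ?divisors_uniq //.
  move=> [x1 x2] [y1 y2] /allpairsP[[u1 u2] [/= h1 h2 [-> ->]]] /allpairsP[[v1 v2] [/= k1 k2 [-> ->]]] /= e.
  rewrite -!dvdn_divisors // in h1 h2 k1 k2.
  have g1 : forall x1 x2, (x1 %| a)%N -> (x2 %| b)%N -> gcdn a (x1 * x2) = x1.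
    move=> z1 z2 z1a z2b; rewrite Gauss_gcdl; first exact/gcdn_idPr.
    by rewrite (coprime_dvdr z2b).
  have g2 : forall x1 x2, (x1 %| a)%N -> (x2 %| b)%N -> gcdn b (x1 * x2) = x2.
    move=> z1 z2 z1a z2b; rewrite Gauss_gcdr; first exact/gcdn_idPr.
    by rewrite (coprime_dvdr z1a) // coprime_sym.
  have := g1 _ _ h1 h2; rewrite e g1 // => ->.
  by have := g2 _ _ h1 h2; rewrite e g2 // => ->.
move=> d; apply/idP/allpairsP.
  rewrite -dvdn_divisors ?muln_gt0 ?a0 // => dab.
  exists (gcdn d a, gcdn d b); rewrite /= -!dvdn_divisors ?dvdn_gcdr //.
  by split => //; apply: gcd_mul_coprime.
move=> [[x1 x2] [/= h1 h2 ->]]; rewrite -dvdn_divisors ?muln_gt0 ?a0 //.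
by rewrite dvdn_mul // dvdn_divisors.
Qed.

Lemma sum_div_mul (G : nat -> int) (Gm : forall x y, G (x * y)%N = G x * G y) a b :
  coprime a b -> (0 < a)%N -> (0 < b)%N ->
  \sum_(d <- divisors (a * b)) G d =
    (\sum_(d <- divisors a) G d) * (\sum_(d <- divisors b) G d).
Proof.
move=> cab a0 b0; rewrite (perm_big _ (divisors_mul_perm _ _ cab a0 b0)).
rewrite big_allpairs_dep big_distrl; apply: eq_bigr => d1 _.
by rewrite big_distrr; apply: eq_bigr => d2 _; rewrite Gm.
Qed.

Lemma divisors_pow_perm q e : prime q ->
  perm_eq (divisors (q ^ e)) [seq (q ^ j)%N | j <- iota 0 e.+1].
Proof.
move=> qp; apply: uniq_perm; first exact: divisors_uniq.
  rewrite map_inj_uniq ?iota_uniq //; exact: expnI (prime_gt1 qp).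
move=> d; rewrite -dvdn_divisors ?expn_gt0 ?prime_gt0 //.
apply/(dvdn_pfactor _ _ qp)/mapP => [[j je ->]|[j]]; first by exists j; rewrite // mem_iota.
by rewrite mem_iota => /andP[_ je] ->; exists j.
Qed.

Lemma geo_closed (x : int) e :
  (1 + x) * \sum_(0 <= j < e.+1) (-x) ^+ j = 1 - (-x) ^+ e.+1.
Proof.
elim: e => [|e IH]; first by rewrite big_nat1 expr0 expr1 mulr1; ring.
rewrite big_nat_recr //= mulrDr IH [(-x) ^+ e.+2]exprS; ring.
Qed.

Lemma geo_pos (x : int) e : 1 <= x ->
  x ^+ e <= \sum_(0 <= j < e.+1) x ^+ j.
Proof.
move=> x1; rewrite big_nat_recr //= lerDr.
by apply: sumr_ge0 => j _; apply: exprn_ge0; lra.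
Qed.

Lemma geo_neg (y : int) e : 2 <= y ->
  let U := (-1) ^+ e * \sum_(0 <= j < e.+1) (-y) ^+ j in
  0 < U /\ y ^+ e <= 2 * U.
Proof.
move=> y2 U.
have hU : (1 + y) * U = (-1) ^+ e + y ^+ e.+1.
  have ss : (-1) ^+ e * (-1) ^+ e = 1 :> int by rewrite -exprMn mulrNN mulr1 expr1n.
  rewrite /U mulrCA geo_closed [(-y) ^+ e.+1]exprNn [(-1) ^+ e.+1]exprS.
  move: ss; set s := (-1) ^+ e; set Y := y ^+ e.+1 => ss.
  transitivity (s + (s * s) * Y); first ring.
  by rewrite ss mul1r.
have pe : forall n, 1 <= y ^+ n by move=> n; apply: exprn_ege1; lra.
have m1 : ((-1) ^+ e = 1%R :> int) \/ ((-1) ^+ e = (-1)%R :> int).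
  rewrite -(@signr_odd int e); case: (odd e); [right|left]; by rewrite ?expr1 ?expr0.
have ye : y ^+ e.+1 = y * y ^+ e by rewrite exprS.
clearbody U.
have U0 : 0 < U.
  have := pe e; move: ye hU; set Y := y ^+ e.+1; set Z := y ^+ e => ye hU pZ.
  have hY : 2 <= Y by rewrite ye; nra.
  have hpos : 0 < (1 + y) * U by rewrite hU; case: m1 => ->; lra.
  by rewrite pmulr_rgt0 in hpos; lra.
split => //.
case: e m1 ye hU => [|e] m1 ye hU.
  rewrite !expr0 expr1 in hU; rewrite expr0.
  have h : 0 < (1 + y) * (2 * U - 1) by rewrite mulrBr mulrCA hU; lra.
  by move: h; rewrite pmulr_rgt0; lra.
have hZ : y <= y ^+ e.+1 by rewrite exprS -{1}[y]mulr1 ler_pM2l ?exprn_ege1; lra.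
have h : 0 <= (1 + y) * (2 * U - y ^+ e.+1).
  rewrite mulrBr mulrCA hU ye; move: hZ; set Z := y ^+ e.+1 => hZ.
  case: m1 => ->; nra.
by move: h; rewrite pmulr_rge0; lra.
Qed.

Lemma PoszX (m n : nat) : ((m ^ n)%N%:Z) = (m%:Z) ^+ n.
Proof. by rewrite -[LHS]natz natrX natz. Qed.

Section Main.
Variables p k : nat.
Hypothesis pp : prime p.
Hypothesis po : odd p.
Hypothesis k0 : (0 < k)%N.

Definition G (d : nat) : int := legendre d p * (d ^ k)%N%:Z.
Definition S (m : nat) : int := \sum_(d <- divisors m) G d.

Lemma Gm x y : G (x * y) = G x * G y.
Proof. by rewrite /G legendreM // expnMn PoszM mulrACA. Qed.

Lemma legX q e : legendre (q ^ e) p = legendre q p ^+ e.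
Proof.
elim: e => [|e IH]; first by rewrite expn0 expr0 legendre1.
by rewrite expnS legendreM // IH exprS.
Qed.

Lemma GX q e : G (q ^ e) = G q ^+ e.
Proof.
elim: e => [|e IH]; first by rewrite expn0 expr0 /G legendre1 // exp1n mul1r.
by rewrite expnS Gm IH exprS.
Qed.

Lemma S_pow q e : prime q -> S (q ^ e) = \sum_(0 <= j < e.+1) G q ^+ j.
Proof.
move=> qp; rewrite /S (perm_big _ (divisors_pow_perm q e qp)) big_map.
by rewrite /index_iota subn0; apply: eq_bigr => j _; rewrite GX.
Qed.

Lemma pp_facts q e : prime q -> ~~ (p %| q)%N ->
  Num.sg (S (q ^ e)) = legendre (q ^ e) p /\ ((q ^ e) ^ k)%N%:Z <= 2 * `|S (q ^ e)|.
Proof.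
move=> qp pq; rewrite S_pow // legX expnAC PoszX.
have y1 : (2 <= (q ^ k)%N%:Z).
  have := prime_gt1 qp => q1.
  by rewrite lez_nat (leq_trans q1) // -{1}[q]expn1 leq_pexp2l // prime_gt0.
case: (legendre_pm1 p pp q pq) => hl; rewrite /G hl.
  rewrite mul1r expr1n.
  set T := \sum_(0 <= j < e.+1) _.
  have hT : (q ^ k)%N%:Z ^+ e <= T by apply: geo_pos; lra.
  have T0 : 0 < T by apply: lt_le_trans hT; apply: exprn_gt0; lra.
  by rewrite gtr0_sg // gtr0_norm //; split => //; lra.
rewrite mulN1r.
have [U0 hU] := geo_neg _ e y1.
set T := \sum_(0 <= j < e.+1) _ in U0 hU *.
have ss : (-1) ^+ e * (-1) ^+ e = 1 :> int by rewrite -exprMn mulrNN mulr1 expr1n.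
have TU : T = (-1) ^+ e * ((-1) ^+ e * T) by rewrite mulrA ss mul1r.
rewrite TU sgrM normrM (gtr0_sg U0) (gtr0_norm U0) normr_sign mul1r mulr1.
split => //; rewrite -(@signr_odd int e); case: (odd e).
  by rewrite expr1 sgrN1.
by rewrite expr0 sgr1.
Qed.

Lemma decomp m : (1 < m)%N -> exists q e r, [/\ prime q, (0 < e)%N, (0 < r)%N, (r < m)%N &
  [/\ coprime (q ^ e) r, (q %| m)%N, (r %| m)%N & m = (q ^ e * r)%N]].
Proof.
move=> m1; have m0 : (0 < m)%N by apply: ltnW.
have qp := pdiv_prime m1; have qm := pdiv_dvd m.
have [r cqr em] := pfactor_coprime qp m0.
set e := logn (pdiv m) m in em.
have e0 : (0 < e)%N by rewrite logn_gt0 mem_primes qp m0 qm.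
have r0 : (0 < r)%N by move: m0; rewrite em muln_gt0 => /andP[].
exists (pdiv m), e, r; split => //.
  rewrite [X in (_ < X)%N]em ltn_Pmulr //; rewrite -{1}(expn0 (pdiv m)) ltn_exp2l ?prime_gt1 //.
split => //.
- by rewrite coprimeXl.
- by rewrite [X in (_ %| X)%N]em dvdn_mulr.
- by rewrite mulnC.
Qed.

Lemma S1 : S 1 = 1.
Proof.
by rewrite /S (_ : divisors 1 = [:: 1%N]) // big_seq1 /G legendre1 // exp1n mulr1.
Qed.

Theorem sign_thm m : (0 < m)%N -> ~~ (p %| m)%N -> Num.sg (S m) = legendre m p.
Proof.
elim/ltn_ind: m => m IH m0 pm.
case: (ltnP 1 m) => m1; last first.
  have -> : m = 1%N by apply/eqP; rewrite eqn_leq m1 m0.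
  by rewrite S1 legendre1 // sgr1.
have [q [e [r [qp e0 r0 rm [cqr qm rmd em]]]]] := decomp m m1.
have pq : ~~ (p %| q)%N by apply: contra pm => pq; apply: dvdn_trans qm.
have pr : ~~ (p %| r)%N by apply: contra pm => pr; apply: dvdn_trans rmd.
rewrite em /S (sum_div_mul G Gm) ?expn_gt0 ?(prime_gt0 qp) //.
rewrite sgrM -/(S (q ^ e)) -/(S r) (IH r) //.
by have [-> _] := pp_facts q e qp pq; rewrite legendreM //.
Qed.

Lemma legsum_S a m : (0 < m)%N -> ~~ (p %| m)%N -> legsum p k (p ^ a * m) = S m.
Proof.
move=> m0 pm.
have key : forall n, legsum p k n = \sum_(d <- [seq d <- divisors n | ~~ (p %| d)%N]) G d.
  move=> n; rewrite big_filter big_mkcond /legsum; apply: eq_bigr => d _.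
  by case: ifP => //= /negbFE pd; rewrite /G legendre_dvd // mul0r.
rewrite (_ : S m = legsum p k m) // !key; apply: perm_big; apply: uniq_perm.
- by rewrite filter_uniq // divisors_uniq.
- by rewrite filter_uniq // divisors_uniq.
move=> d; rewrite !mem_filter.
case: (boolP (p %| d)%N) => //= pd.
rewrite -!dvdn_divisors ?muln_gt0 ?expn_gt0 ?(prime_gt0 pp) ?m0 //.
rewrite Gauss_dvdr // coprime_sym coprimeXl //.
by rewrite prime_coprime.
Qed.

End Main.

Lemma intr_nat (R : pzRingType) (n : nat) : ((n%:Z)%:~R : R) = n%:R.
Proof. by []. Qed.

Section Bound.
Variable R : realType.
Variables (eps : R) (N : nat).
Hypothesis eps0 : 0 < eps.
Hypothesis hN : forall q : nat, (N <= q)%N -> 2 <= (q%:R : R) `^ eps.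
Variables p k : nat.
Hypothesis pp : prime p.
Hypothesis po : odd p.
Hypothesis k0 : (0 < k)%N.

Definition cnt (m : nat) := count (fun i => prime i && (i %| m)%N) (iota 0 N).

Lemma cnt1 : cnt 1 = 0%N.
Proof.
rewrite /cnt (eq_count (a2 := pred0)) ?count_pred0 // => i /=.
by rewrite dvdn1; case: eqP => [->|]; rewrite ?andbF.
Qed.

Lemma cnt_le m : (cnt m <= N)%N.
Proof. by have := count_size (fun i => prime i && (i %| m)%N) (iota 0 N); rewrite size_iota. Qed.

Lemma cnt_mul q e r : prime q -> (0 < e)%N -> ~~ (q %| r)%N ->
  cnt (q ^ e * r) = (cnt r + (q < N))%N.
Proof.
move=> qp e0 qr; rewrite /cnt.
rewrite (eq_count (a2 := predU (fun i => prime i && (i %| r)%N) (pred1 q))); last first.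
  move=> i /=; case pi: (prime i) => /=; last first.
    by case: eqP => // iq; rewrite iq qp in pi.
  by rewrite Euclid_dvdM // Euclid_dvdX // e0 andbT dvdn_prime2 // orbC.
have := count_predUI (fun i => prime i && (i %| r)%N) (pred1 q) (iota 0 N).
rewrite (eq_count (a1 := predI _ _) (a2 := pred0)) ?count_pred0 ?addn0 => [->|i /=].
  by rewrite count_uniq_mem ?iota_uniq // mem_iota.
by case: eqP => [->|]; rewrite ?(negbTE qr) ?andbF.
Qed.

Lemma pp_bound q e : prime q -> (0 < e)%N -> ~~ (p %| q)%N ->
  ((q ^ e)%N%:R : R) `^ (k%:R - eps) <= 2 ^+ (q < N) * `|(S p k (q ^ e))%:~R|.
Proof.
move=> qp e0 pq; have [_ hT] := pp_facts p k pp po k0 q e qp pq.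
set T := S p k (q ^ e) in hT *.
set Q := ((q ^ e)%N%:R : R).
have Q1 : 1 <= Q by rewrite /Q ler1n expn_gt0 prime_gt0.
have Q0 : 0 < Q by lra.
have hTR : Q ^+ k <= 2 * `|T%:~R|.
  rewrite -(ler_int R) intrM intr_norm in hT.
  by move: hT; rewrite intr_nat /Q natrX.
have Qe1 : 1 <= Q `^ eps.
  by rewrite -(powRr0 Q); apply: ler_powR => //; apply: ltW.
have hk : Q `^ k%:R = Q ^+ k by apply: powR_mulrn; exact: ltW.
rewrite powRB; last by apply/implyP => _; rewrite gt_eqF.
suff H : Q ^+ k / Q `^ eps <= 2 ^+ (q < N) * `|T%:~R|.
  by apply: le_trans H; rewrite le_eqVlt; apply/orP; left; apply/eqP; congr (_ / _); exact: hk.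
rewrite ler_pdivrMr ?(lt_le_trans _ Qe1) //.
have Tn : 0 <= `|(T%:~R : R)| by [].
case: ltnP => qN.
  rewrite expr1; apply: le_trans hTR _; apply: ler_peMr => //.
  by rewrite mulr_ge0 // ler0n.
have Qe2 : 2 <= Q `^ eps.
  apply: le_trans (hN _ qN) _; apply: ge0_ler_powR; rewrite ?nnegrE ?ler0n ?(ltW Q0) ?(ltW eps0) //.
  by rewrite /Q ler_nat -{1}[q]expn1 leq_pexp2l ?(prime_gt0 qp).
rewrite expr0 mul1r; apply: le_trans hTR _.
rewrite mulrC; exact: ler_wpM2l.
Qed.

Lemma bound m : (0 < m)%N -> ~~ (p %| m)%N ->
  (m%:R : R) `^ (k%:R - eps) <= 2 ^+ cnt m * `|(S p k m)%:~R|.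
Proof.
elim/ltn_ind: m => m IH m0 pm.
case: (ltnP 1 m) => m1; last first.
  have -> : m = 1%N by apply/eqP; rewrite eqn_leq m1 m0.
  rewrite cnt1 S1 // mulr1n powR1 expr0 mul1r.
  by rewrite normr1.
have [q [e [r [qp e0 r0 rm [cqr qm rmd em]]]]] := decomp m m1.
have pq : ~~ (p %| q)%N by apply: contra pm => pq; apply: dvdn_trans qm.
have pr : ~~ (p %| r)%N by apply: contra pm => pr; apply: dvdn_trans rmd.
have qr : ~~ (q %| r)%N by rewrite -prime_coprime // -(coprime_pexpl _ _ e0).
rewrite em natrM powRM ?ler0n // cnt_mul // addnC exprD.
rewrite /S (sum_div_mul (G p k) (Gm p k pp po)) ?expn_gt0 ?(prime_gt0 qp) //.
rewrite -/(S p k (q ^ e)) -/(S p k r) intrM normrM mulrACA.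
apply: ler_pM; rewrite ?powR_ge0 //; first exact: pp_bound.
exact: IH.
Qed.

End Bound.

Theorem lemma7p1 (R : realType) :
  (forall eps : R, 0 < eps ->
     exists c : R, 0 < c /\
       forall p k a m : nat,
         prime p -> odd p -> (0 < k)%N -> (0 < m)%N -> ~~ (p %| m)%N ->
         c * ((m%:R : R) `^ (k%:R - eps)) <= `|(legsum p k (p ^ a * m)%N)%:~R : R|)
  /\
  (forall p k a m : nat,
     prime p -> odd p -> (0 < k)%N -> (0 < m)%N -> ~~ (p %| m)%N ->
     Num.sg (legsum p k (p ^ a * m)%N) = legendre m p).
Proof.
split; last first.
  move=> p k a m pp po k0 m0 pm.
  by rewrite legsum_S // sign_thm.
move=> eps eps0.
pose N := (Num.truncn ((2 : R) `^ eps^-1)).+1.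
have hN : forall q : nat, (N <= q)%N -> 2 <= (q%:R : R) `^ eps.
  move=> q qN.
  have h1 : (2 : R) `^ eps^-1 <= q%:R.
    by apply: le_trans (ltW (truncnS_gt _)) _; rewrite ler_nat.
  have : ((2 : R) `^ eps^-1) `^ eps <= q%:R `^ eps.
    by apply: ge0_ler_powR; rewrite ?nnegrE ?powR_ge0 ?ler0n ?(ltW eps0).
  by rewrite -powRrM mulVf ?gt_eqF // powRr1.
exists ((2 ^+ N)^-1); split; first by rewrite invr_gt0 exprn_gt0.
move=> p k a m pp po k0 m0 pm.
rewrite legsum_S //.
have B := @bound R eps N eps0 hN p k pp po k0 m m0 pm.
rewrite mulrC ler_pdivrMr ?exprn_gt0 //.
apply: le_trans B _; rewrite mulrC; apply: ler_wpM2l => //.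
by rewrite ler_eXn2l ?ltr1n // cnt_le.
Qed.
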